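(* Let $\lambda_2$ be the second smallest eigenvalue of the Laplacian of $G$ and $\psi_c=8\,n\,\Delta\, s_{\max}/\lambda_2$. Suppose $m\ge 8\,\delta\, n^2\,\mathcal{S}\, s_{\max}$ for some $\delta>1$. Then every state $x$ with $\Psi_0(x)\le 4\psi_c$ is a $2/(1+\delta)$-approximate Nash equilibrium.
   Context: $G=(V,E)$ is a connected undirected graph on $n\ge2$ vertices with maximum degree $\Delta$; its Laplacian $L$ has $L_{ii}=\deg(i)$, $L_{ij}=-1$ if $\{i,j\}\in E$, $0$ otherwise. Processor $i$ has speed $s_i>0$, scaled so the smallest speed is $1$; $s_{\max}=\max_i s_i$, $\mathcal{S}=\sum_i s_i$. There are $m$ unit tasks; a state $x$ assigns each task to a processor, $w_i(x)$ is the number of tasks on $i$ and $\ell_i(x)=w_i(x)/s_i$. $\Psi_0(x)=\sum_i (w_i(x)-m s_i/\mathcal{S})^2/s_i$. A state is an $\varepsilon$-approximate Nash equilibrium if $(1-\varepsilon)\ell_i-\ell_j\le 1/s_j$ for every ordered pair $(i,j)$ of adjacent processors. *)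

(* Defs.v *)
From mathcomp Require Import all_boot all_order all_algebra.
From mathcomp Require Import reals.
Set Implicit Arguments. Unset Strict Implicit. Unset Printing Implicit Defensive.
Import Order.TTheory GRing.Theory Num.Theory.
Local Open Scope ring_scope.

Definition simple_graph (n : nat) (e : rel 'I_n) : Prop :=
  (forall i j, e i j = e j i) /\ (forall i, ~~ e i i).

Definition connected_graph (n : nat) (e : rel 'I_n) : Prop :=
  forall i j, connect e i j.

Definition deg (n : nat) (e : rel 'I_n) (i : 'I_n) : nat := #|[pred j | e i j]|.

Definition max_deg (n : nat) (e : rel 'I_n) : nat := \max_(i < n) deg e i.

Definition laplacian (R : ringType) (n : nat) (e : rel 'I_n) : 'M[R]_n :=
  \matrix_(i, j) (if i == j then (deg e i)%:R else if e i j then -1 else 0).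

(* lam is the second smallest eigenvalue of A, eigenvalues counted with
   multiplicity: the characteristic polynomial of A factors as
   prod (X - a) over the nondecreasingly sorted list ev, and lam = ev_2. *)
Definition second_smallest_eigenvalue (R : realType) (n : nat) (A : 'M[R]_n)
    (lam : R) : Prop :=
  exists ev : seq R,
    [/\ size ev = n, sorted <=%R ev,
        char_poly A = \prod_(a <- ev) ('X - a%:P) & lam = ev`_1].

Definition s_max (R : realType) (n : nat) (s : 'I_n -> R) : R :=
  \big[Num.max/0]_(i < n) s i.

Definition s_sum (R : realType) (n : nat) (s : 'I_n -> R) : R :=
  \sum_(i < n) s i.

(* a state assigns each of the m unit tasks to a processor *)
Definition load_w (n m : nat) (x : 'I_m -> 'I_n) (i : 'I_n) : nat :=
  #|[pred t | x t == i]|.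

Definition load_l (R : realType) (n m : nat) (s : 'I_n -> R)
    (x : 'I_m -> 'I_n) (i : 'I_n) : R :=
  (load_w x i)%:R / s i.

Definition Psi0 (R : realType) (n m : nat) (s : 'I_n -> R)
    (x : 'I_m -> 'I_n) : R :=
  \sum_(i < n) ((load_w x i)%:R - m%:R * s i / s_sum s) ^+ 2 / s i.

Definition approx_NE (R : realType) (n m : nat) (e : rel 'I_n)
    (s : 'I_n -> R) (eps : R) (x : 'I_m -> 'I_n) : Prop :=
  forall i j, e i j ->
    (1 - eps) * load_l s x i - load_l s x j <= 1 / s j.

(* Main.v *)
Require Import Defs.
From mathcomp Require Import all_boot all_order all_algebra.
From mathcomp Require Import reals.
Import Order.TTheory GRing.Theory Num.Theory.
Local Open Scope ring_scope.
From mathcomp Require Import ring lra.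
Set Implicit Arguments. Unset Strict Implicit.
Section Lap.
Variables (R : realType) (n : nat) (e : rel 'I_n).
Hypothesis sg : simple_graph e.

Lemma degE (i : 'I_n) : \sum_j ((e i j)%:R : R) = (deg e i)%:R.
Proof.
rewrite /deg -sum1_card natr_sum; rewrite [RHS]big_mkcond /=.
by apply: eq_bigr => j _; rewrite inE; case: (e i j).
Qed.

Lemma lapE i j : laplacian R e i j = (i == j)%:R * (deg e i)%:R - (e i j)%:R.
Proof.
rewrite /laplacian mxE; case: eqP => [->|_].
  by have := (proj2 sg) j; case: (e j j) => //= _; rewrite mul1r subr0.
by rewrite mul0r sub0r; case: (e i j) => //=; rewrite oppr0.
Qed.

Lemma lap_row i : \sum_j laplacian R e i j = 0.
Proof.
under eq_bigr do rewrite lapE.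
rewrite sumrB degE (bigD1 i) //= eqxx mul1r big1 ?addr0 ?subrr //.
by move=> j /negbTE; rewrite eq_sym => ->; rewrite mul0r.
Qed.

Variable f : 'I_n -> R.

Definition Qf := \sum_i \sum_j (e i j)%:R * (f i - f j) ^+ 2.

Lemma quadE : \sum_j (\sum_i f i * laplacian R e i j) * f j
   = Qf / 2.
Proof.
have X1 : \sum_j (\sum_i f i * laplacian R e i j) * f j =
   \sum_i (deg e i)%:R * f i ^+ 2 - \sum_i \sum_j (e i j)%:R * (f i * f j).
  under eq_bigr do rewrite mulr_suml.
  rewrite exchange_big /= -sumrB; apply: eq_bigr => i _.
  rewrite (bigD1 i) //= lapE eqxx mul1r.
  rewrite [X in _ = _ - X](bigD1 i) //=.
  rewrite (negbTE ((proj2 sg) i)) subr0 mul0r add0r.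
  have -> : \sum_(j < n | j != i) (e i j)%:R * (f i * f j) =
     - \sum_(j < n | j != i) f i * laplacian R e i j * f j.
    rewrite -sumrN; apply: eq_bigr => j /negbTE ji; rewrite lapE eq_sym ji mul0r sub0r; ring.
  ring.
have X2 : Qf = \sum_i (deg e i)%:R * f i ^+ 2 + \sum_i (deg e i)%:R * f i ^+ 2
     - 2 * \sum_i \sum_j (e i j)%:R * (f i * f j).
  have Y : \sum_i \sum_j (e i j)%:R * f j ^+ 2 = \sum_i (deg e i)%:R * f i ^+ 2.
    rewrite exchange_big /=; apply: eq_bigr => i _.
    rewrite -degE mulr_suml; apply: eq_bigr => j _; by rewrite (proj1 sg).
  rewrite -{2}Y /Qf mulr_sumr -big_split -sumrB /=; apply: eq_bigr => i _.
  rewrite -degE mulr_suml mulr_sumr -big_split -sumrB /=; apply: eq_bigr => j _.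
  ring.
by rewrite X1 X2; field.
Qed.

Fixpoint psum (x : 'I_n) (p : seq 'I_n) : R :=
  match p with [::] => 0 | y :: p' => (f x - f y) ^+ 2 + psum y p' end.

Lemma psum_ge0 x p : 0 <= psum x p.
Proof.
elim: p x => [|y p IH] x //=; apply: addr_ge0; [exact: sqr_ge0 | exact: IH].
Qed.

Lemma psum_cs x p : (f x - f (last x p)) ^+ 2 <= psum x p * (size p)%:R.
Proof.
elim: p x => [|y p IH] x /=; first by rewrite subrr expr0n /= mul0r.
have := IH y; have := psum_ge0 y p.
set S := psum y p; set l := last y p; set k := size p.
case: k => [|k] => [|HS IHy].
  rewrite mulr0 => HS H0; have -> : f l = f y.
    by apply/eqP; rewrite eq_sym -subr_eq0 -sqrf_eq0 eq_le H0 sqr_ge0.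
  rewrite mulr1; have := sqr_ge0 (f y - f y); rewrite subrr expr0n /= => _. lra.
have Hk : (0 : R) < k.+1%:R by rewrite ltr0Sn.
rewrite -[k.+2]addn1 natrD.
set K := k.+1%:R in Hk IHy *.
set d := f x - f y; set D := f y - f l in IHy *.
have -> : f x - f l = d + D by rewrite /d /D; ring.
have H2 : 0 <= (d * K - D) ^+ 2 := sqr_ge0 _.
suff : K * ((d + D) ^+ 2) <= K * ((d ^+ 2 + S) * (K + 1)).
  by rewrite ler_pM2l.
nra.
Qed.

Definition rowq i := \sum_j (e i j)%:R * (f i - f j) ^+ 2.

Lemma rowq_ge0 i : 0 <= rowq i.
Proof. by apply: sumr_ge0 => j _; apply: mulr_ge0; [exact: ler0n | exact: sqr_ge0]. Qed.

Lemma psum_le x p : path e x p -> psum x p <= \sum_(i <- x :: p) rowq i.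
Proof.
elim: p x => [|y p IH] x /=; first by rewrite big_cons big_nil addr0 rowq_ge0.
move=> /andP [exy pp]; rewrite big_cons; apply: lerD; last exact: IH.
rewrite /rowq (bigD1 y) //= exy mul1r lerDl.
by apply: sumr_ge0 => j _; apply: mulr_ge0; [exact: ler0n | exact: sqr_ge0].
Qed.

Lemma uniq_le (s : seq 'I_n) : uniq s -> \sum_(i <- s) rowq i <= Qf.
Proof.
move=> us; rewrite big_uniq // /Qf -/rowq big_mkcond /=.
apply: ler_sum => i _; case: (i \in s) => //; exact: rowq_ge0.
Qed.
End Lap.

Lemma eig_bound (R : realType) (n : nat) (e : rel 'I_n) (mu : R) (v : 'rV[R]_n) :
  simple_graph e -> connected_graph e ->
  v *m laplacian R e = mu *: v -> v != 0 -> 0 < mu ->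
  1 <= 2 * n%:R ^+ 2 * mu.
Proof.
move=> sg cg Hv v0 mu0.
set f := fun i => v 0 i.
have [i0 fi0] : exists i, f i != 0.
  case: (pickP (fun i => f i != 0)) => [i Hi|H]; first by exists i.
  case/negP: v0; apply/eqP/rowP => j; rewrite mxE; exact/eqP/negbFE/H.
have Hcol j : (v *m laplacian R e) 0 j = \sum_i f i * laplacian R e i j by rewrite mxE.
have Hsum : \sum_j f j = 0.
  have : mu * \sum_j f j = 0.
    rewrite mulr_sumr.
    have -> : \sum_j mu * f j = \sum_j (v *m laplacian R e) 0 j.
      by apply: eq_bigr => j _; rewrite Hv mxE.
    under eq_bigr do rewrite Hcol.
    rewrite exchange_big /= big1 // => i _; by rewrite -mulr_sumr lap_row // mulr0.
  by move/eqP; rewrite mulf_eq0 gt_eqF //= => /eqP.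
have Hq : mu * \sum_j f j ^+ 2 = Qf e f / 2.
  rewrite -quadE // mulr_sumr; apply: eq_bigr => j _.
  by rewrite -Hcol Hv mxE /f; ring.
have Hn : (0 : R) < n%:R by rewrite ltr0n; apply: leq_ltn_trans (ltn_ord i0).
case: (@arg_maxP _ _ _ i0 predT f isT) => a _ Ha.
case: (@arg_minP _ _ _ i0 predT f isT) => b _ Hb.
have fa0 : 0 <= f a.
  have : \sum_j f j <= \sum_(j < n) f a by apply: ler_sum => j _; exact: Ha.
  rewrite Hsum sumr_const card_ord -mulr_natl => H.
  by rewrite -(pmulr_rge0 _ Hn).
have fb0 : f b <= 0.
  have : \sum_(j < n) f b <= \sum_j f j by apply: ler_sum => j _; exact: Hb.
  rewrite Hsum sumr_const card_ord -mulr_natl => H.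
  by rewrite -(pmulr_rle0 _ Hn).
set r := f a - f b.
have HF : \sum_j f j ^+ 2 <= n%:R * r ^+ 2.
  have : \sum_j f j ^+ 2 <= \sum_(j < n) r ^+ 2.
    apply: ler_sum => j _; have := Ha j isT; have := Hb j isT.
    rewrite /r => h1 h2; have {h2} h2 : f j <= f a := h2.
    have h3 : 0 <= (f a - f b - f j) * (f a - f b + f j) by apply: mulr_ge0; lra.
    nra.
  by rewrite sumr_const card_ord mulr_natl.
have HF0 : 0 < \sum_j f j ^+ 2.
  rewrite (bigD1 i0) //=; apply: ltr_pwDl; first by rewrite lt_def sqr_ge0 andbT sqrf_eq0 fi0.
  by apply: sumr_ge0 => j _; exact: sqr_ge0.
have Hr : r ^+ 2 <= Qf e f * n%:R.
  case/connectP: (cg a b) => p pth Eb; rewrite /r Eb.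
  case: (shortenP pth) => p' pth' up' _.
  apply: le_trans (psum_cs f a p') _.
  have Hs : (size p' < n)%N.
    by have := max_card [pred x in a :: p']; rewrite card_ord (card_uniqP up').
  have Hs' : ((size p')%:R : R) <= n%:R by rewrite ler_nat ltnW.
  have H1 := psum_le f pth'.
  have H2 := uniq_le e f up'.
  have H3 := psum_ge0 f a p'.
  apply: (@le_trans _ _ (psum f a p' * n%:R)); first by apply: ler_wpM2l.
  by apply: ler_wpM2r; [exact: ltW | exact: le_trans H2].
nra.
Qed.

Unset Implicit Arguments.
Theorem lemma20 (R : realType) (n : nat) (e : rel 'I_n) (s : 'I_n -> R)
    (m : nat) (delta lam2 : R) :
  (2 <= n)%N ->
  simple_graph e ->
  connected_graph e ->
  (forall i, 0 < s i) ->
  (forall i, 1 <= s i) -> (exists i, s i = 1) ->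
  second_smallest_eigenvalue (laplacian R e) lam2 ->
  1 < delta ->
  8 * delta * (n%:R) ^+ 2 * s_sum s * s_max s <= m%:R ->
  forall x : 'I_m -> 'I_n,
    Psi0 s x <= 4 * (8 * n%:R * (max_deg e)%:R * s_max s / lam2) ->
    approx_NE e s (2 / (1 + delta)) x.
Proof.
move=> n2 sg cg spos sge1 [i1 si1] [ev [sz _ cp l2]] d1 Hm x HP.
set S := s_sum s in Hm *; set sM := s_max s in Hm HP *.
set P := Psi0 s x in HP *.
set Dl := (max_deg e)%:R in HP.
have S0 : 0 < S.
  rewrite /S /s_sum (bigD1 i1) //=; apply: ltr_pwDl; first exact: spos.
  by apply: sumr_ge0 => j _; apply: ltW.
have sM1 : 1 <= sM by rewrite /sM /s_max -si1; exact: le_bigmax.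
have Hn : (2 : R) <= n%:R by rewrite (ler_nat R 2 n).
have HD : 0 <= Dl <= n%:R.
  rewrite ler0n /= /Dl ler_nat /max_deg; apply/bigmax_leqP => i _.
  by rewrite /deg; have := max_card [pred j | e i j]; rewrite card_ord.
set A := m%:R / S.
have HA : 8 * delta * n%:R ^+ 2 * sM <= A.
  rewrite /A ler_pdivlMr //; apply: le_trans Hm; rewrite le_eqVlt; apply/orP; left; apply/eqP; ring.
have HPb : P <= 64 * n%:R ^+ 4 * sM ^+ 2.
  have P0 : 0 <= P.
    rewrite /P /Psi0; apply: sumr_ge0 => i _; apply: divr_ge0; [exact: sqr_ge0|exact: ltW].
  case: (lerP lam2 0) => hl.
    apply: (le_trans HP).
    have hi : lam2^-1 <= 0 by rewrite invr_le0.
    have hc : 0 <= n%:R * Dl * sM by apply: mulr_ge0; [apply: mulr_ge0|]; lra.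
    have hr : 0 <= n%:R ^+ 4 * sM ^+ 2 by apply: mulr_ge0; apply: exprn_ge0; lra.
    nra.
  have Hev : eigenvalue (laplacian R e) lam2.
    rewrite eigenvalue_root_char cp root_prod_XsubC l2 mem_nth // sz.
    exact: n2.
  case/eigenvalueP: Hev => v Hv v0.
  have Hb := eig_bound sg cg Hv v0 hl.
  apply: (le_trans HP).
  rewrite [4 * _]mulrA ler_pdivrMr //.
  have H1 : 0 <= n%:R * Dl * sM by apply: mulr_ge0; [apply: mulr_ge0|]; lra.
  have H2 : 0 <= n%:R * Dl * sM * (2 * n%:R ^+ 2 * lam2 - 1) by apply: mulr_ge0; lra.
  have H3 : Dl * sM <= n%:R * sM ^+ 2.
    case/andP: HD => hd0 hdn.
    have h5 : Dl * sM <= n%:R * sM by apply: ler_wpM2r; lra.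
    have h6 : 0 <= n%:R * (sM * (sM - 1)) by apply: mulr_ge0; [|apply: mulr_ge0]; lra.
    nra.
  have H4 : 0 <= n%:R ^+ 3 * (n%:R * sM ^+ 2 - Dl * sM).
    by apply: mulr_ge0; [apply: exprn_ge0; lra | lra].
  nra.
have HT i : ((load_w x i)%:R - m%:R * s i / S) ^+ 2 / s i <= P.
  rewrite /P /Psi0 (bigD1 i) //= -/S lerDl; apply: sumr_ge0 => j _.
  by apply: divr_ge0; [exact: sqr_ge0 | exact: ltW].
set B := 8 * n%:R ^+ 2 * sM.
have B0 : 0 <= B by rewrite /B; apply: mulr_ge0; [apply: mulr_ge0|]; [lra|apply: exprn_ge0; lra|lra].
have HBA : delta * B <= A by rewrite /B; lra.
have HPB : P <= B ^+ 2 by rewrite /B; lra.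
have Hl i : load_l s x i = A + ((load_w x i)%:R - m%:R * s i / S) / s i.
  have := spos i; rewrite /load_l /A => hs; field; rewrite !lt0r_neq0 //.
have Ha i : `|((load_w x i)%:R - m%:R * s i / S) / s i| <= B.
  set t := (load_w x i)%:R - m%:R * s i / S.
  have hs := spos i; have hs1 := sge1 i.
  have h1 : (t / s i) ^+ 2 <= B ^+ 2.
    apply: le_trans (HPB); apply: le_trans (HT i).
    rewrite expr_div_n ler_pdivrMr ?exprn_gt0 //.
    rewrite -/t [s i ^+ 2]expr2 mulrA divfK ?lt0r_neq0 //.
    rewrite ler_peMr //; exact: sqr_ge0.
  case: (lerP 0 (t / s i)) => hy; [rewrite ger0_norm // | rewrite ltr0_norm //]; nra.
move=> i j eij.
rewrite !Hl.
have hi := Ha i; have hj := Ha j.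
set ai := ((load_w x i)%:R - m%:R * s i / S) / s i in hi *.
set aj := ((load_w x j)%:R - m%:R * s j / S) / s j in hj *.
move: hi hj; rewrite !ler_norml => /andP [hi1 hi2] /andP [hj1 hj2].
have hsj : 0 <= 1 / s j by rewrite divr_ge0 //; apply: ltW.
apply: le_trans hsj.
have -> : (1 - 2 / (1 + delta)) * (A + ai) - (A + aj)
    = ((delta - 1) * (A + ai) - (1 + delta) * (A + aj)) / (1 + delta).
  by field; rewrite lt0r_neq0 //; lra.
rewrite ler_pdivrMr ?mul0r; last lra.
have p1 : 0 <= (delta - 1) * (B - ai) by apply: mulr_ge0; lra.
have p2 : 0 <= (1 + delta) * (B + aj) by apply: mulr_ge0; lra.
nra.
Qed.
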